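(* Let $\mathcal E=\widetilde{\Omega^1_D}(\mathcal A)$ be the bimodule of one-forms of a spectral triple $(\mathcal A,\mathcal H,D)$ and suppose $\mathcal E$ satisfies Assumption III. Endow $\mathcal Z(\mathcal E)\otimes_{\mathcal Z(\mathcal A)}\mathcal A$ with the $\mathcal A$-bimodule structure $b(e\otimes a)c=e\otimes bac$ and $\mathcal A\otimes_{\mathcal Z(\mathcal A)}\mathcal Z(\mathcal E)$ with $b(a\otimes e)c=bac\otimes e$ ($a,b,c\in\mathcal A$, $e\in\mathcal Z(\mathcal E)$). Then there are isomorphisms of $\mathcal A$-$\mathcal A$-bimodules $$\mathcal E\cong\mathcal A\otimes_{\mathcal Z(\mathcal A)}\mathcal Z(\mathcal E)\cong\mathcal Z(\mathcal E)\otimes_{\mathcal Z(\mathcal A)}\mathcal A.$$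
   Context: $\mathcal E$ is the linear span in $B(\mathcal H)$ of $\{a[D,b]:a,b\in\mathcal A\}$, an $\mathcal A$-bimodule. $\mathcal Z(\mathcal E)=\{e:ea=ae\ \forall a\in\mathcal A\}$, $\mathcal Z(\mathcal A)$ the center of $\mathcal A$. Assumption III: $\mathcal Z(\mathcal E)$ is finitely generated and projective over $\mathcal Z(\mathcal A)$, and the map $u^{\mathcal E}:\mathcal Z(\mathcal E)\otimes_{\mathcal Z(\mathcal A)}\mathcal A\to\mathcal E$, $\sum_i e_i\otimes a_i\mapsto\sum_ie_ia_i$, is an isomorphism of vector spaces. *)

(* Defs.v *)
From HB Require Import structures.
From mathcomp Require Import all_boot all_algebra.
Set Implicit Arguments. Unset Strict Implicit. Unset Printing Implicit Defensive.
Import GRing.Theory.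
Local Open Scope ring_scope.

(* Abstract setting: B plays the role of B(H) (a unital ring), A a unital
   subring, delta : B -> B plays the role of b |-> [D,b] (only its values on A
   matter). *)
Section OneForms.
Variable B : nzRingType.

Definition one_forms (A : {pred B}) (delta : B -> B) (x : B) : Prop :=
  exists s : seq (B * B),
    (forall p, p \in s -> (p.1 \in A) /\ (p.2 \in A)) /\
    x = \sum_(p <- s) p.1 * delta p.2.

Definition center_alg (A : {pred B}) (z : B) : Prop :=
  z \in A /\ forall a, a \in A -> z * a = a * z.

Definition center_bimod (A : {pred B}) (E : B -> Prop) (e : B) : Prop :=
  E e /\ forall a, a \in A -> e * a = a * e.

Definition balanced_map (M Z N : B -> Prop) (W : zmodType) (f : B -> B -> W)
  : Prop :=
  [/\ forall m m' n, M m -> M m' -> N n -> f (m + m') n = f m n + f m' n,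
      forall m n n', M m -> N n -> N n' -> f m (n + n') = f m n + f m n'
    & forall m z n, M m -> Z z -> N n -> f (m * z) n = f m (z * n)].

Definition additive_map (U W : zmodType) (g : U -> W) : Prop :=
  forall x y, g (x + y) = g x + g y.

Definition is_tensor_product (M Z N : B -> Prop) (T : zmodType)
  (tau : B -> B -> T) : Prop :=
  balanced_map M Z N tau /\
  forall (W : zmodType) (f : B -> B -> W), balanced_map M Z N f ->
    (exists g : T -> W, additive_map g /\
        forall m n, M m -> N n -> g (tau m n) = f m n) /\
    (forall g1 g2 : T -> W, additive_map g1 -> additive_map g2 ->
        (forall m n, M m -> N n -> g1 (tau m n) = g2 (tau m n)) ->
        forall t, g1 t = g2 t).

(* M is a finitely generated projective Z-module (action z . m = z * m):
   a retract of a free module Z^n of finite rank *)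
Definition fg_projective (Z M : B -> Prop) : Prop :=
  exists (n : nat) (p : B -> 'I_n -> B) (s : ('I_n -> B) -> B),
    [/\ forall x i, M x -> Z (p x i),
        forall x y i, M x -> M y -> p (x + y) i = p x i + p y i,
        forall z x i, Z z -> M x -> p (z * x) i = z * p x i
      & forall v, (forall i, Z (v i)) -> M (s v)] /\
    [/\
        forall v w, (forall i, Z (v i)) -> (forall i, Z (w i)) ->
          s (fun i => v i + w i) = s v + s w,
        forall z v, Z z -> (forall i, Z (v i)) -> s (fun i => z * v i) = z * s v
      & forall x, M x -> s (p x) = x].

Definition additive_actions (A : {pred B}) (T : zmodType)
  (l : B -> T -> T) (r : T -> B -> T) : Prop :=
  (forall b, b \in A -> additive_map (l b)) /\
  (forall c, c \in A -> additive_map (fun t => r t c)).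

Definition bimodule_iso (A : {pred B}) (E : B -> Prop) (T : zmodType)
  (l : B -> T -> T) (r : T -> B -> T) (phi : B -> T) : Prop :=
  [/\ forall x y, E x -> E y -> phi (x + y) = phi x + phi y,
      forall b x, b \in A -> E x -> phi (b * x) = l b (phi x),
      forall x c, c \in A -> E x -> phi (x * c) = r (phi x) c,
      forall x y, E x -> E y -> phi x = phi y -> x = y
    & forall t, exists x, E x /\ phi x = t].

End OneForms.

(* Main.v *)
Require Import Defs.
From HB Require Import structures.
From Stdlib Require Import Classical ClassicalEpsilon.
From mathcomp Require Import all_boot all_algebra.
Import GRing.Theory.
Local Open Scope ring_scope.

Theorem proposition4p13 (B : nzRingType) (A : {pred B}) (delta : B -> B)
  (A_subring : subring_closed A)
  (delta_Leibniz : forall a b, a \in A -> b \in A ->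
      delta (a * b) = a * delta b + delta a * b)
  (* T1 = Z(E) (x)_{Z(A)} A, with b (e (x) a) c = e (x) bac *)
  (T1 : zmodType) (tau1 : B -> B -> T1) (l1 : B -> T1 -> T1) (r1 : T1 -> B -> T1)
  (T1_tensor : is_tensor_product
      (center_bimod A (one_forms A delta)) (center_alg A) (fun a => a \in A)
      tau1)
  (T1_act : additive_actions A l1 r1)
  (T1_l : forall b e a, b \in A -> center_bimod A (one_forms A delta) e ->
      a \in A -> l1 b (tau1 e a) = tau1 e (b * a))
  (T1_r : forall e a c, c \in A -> center_bimod A (one_forms A delta) e ->
      a \in A -> r1 (tau1 e a) c = tau1 e (a * c))
  (* T2 = A (x)_{Z(A)} Z(E), with b (a (x) e) c = bac (x) e *)
  (T2 : zmodType) (tau2 : B -> B -> T2) (l2 : B -> T2 -> T2) (r2 : T2 -> B -> T2)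
  (T2_tensor : is_tensor_product
      (fun a => a \in A) (center_alg A) (center_bimod A (one_forms A delta))
      tau2)
  (T2_act : additive_actions A l2 r2)
  (T2_l : forall b a e, b \in A -> a \in A ->
      center_bimod A (one_forms A delta) e ->
      l2 b (tau2 a e) = tau2 (b * a) e)
  (T2_r : forall a e c, c \in A -> a \in A ->
      center_bimod A (one_forms A delta) e ->
      r2 (tau2 a e) c = tau2 (a * c) e)
  (* Assumption III *)
  (fgp : fg_projective (center_alg A) (center_bimod A (one_forms A delta)))
  (uE_iso : exists u : T1 -> B, [/\ additive_map u,
      forall e a, center_bimod A (one_forms A delta) e -> a \in A ->
        u (tau1 e a) = e * a,
      injective u
    & forall x, one_forms A delta x <-> exists t, u t = x]) :
  (exists phi : B -> T2, bimodule_iso A (one_forms A delta) l2 r2 phi) /\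
  (exists psi : B -> T1, bimodule_iso A (one_forms A delta) l1 r1 psi).
Proof.
set EZ := center_bimod A (one_forms A delta).
have mulA : forall x y, x \in A -> y \in A -> x * y \in A.
  by move=> x y hx hy; case: A_subring => _ _ /(_ x y hx hy).
case: T1_tensor => tau1_bal T1_univ.
case: T2_tensor => tau2_bal T2_univ.
have balB : forall (M Z N : B -> Prop), balanced_map M Z N (fun m n => m * n).
  by move=> M Z N; split=> *; rewrite ?mulrDl ?mulrDr ?mulrA.
have uniq1 : forall g1 g2 : T1 -> B, additive_map g1 -> additive_map g2 ->
   (forall m n, EZ m -> n \in A -> g1 (tau1 m n) = g2 (tau1 m n)) ->
   forall t, g1 t = g2 t.
  by move=> g1 g2; apply: (T1_univ B _ (balB _ _ _)).2.
case: uE_iso => u [uadd utau uinj uim].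
case: T1_act => l1add r1add.
case: T2_act => l2add r2add.
have uL : forall b t, b \in A -> u (l1 b t) = b * u t.
  move=> b t hb; apply: (uniq1 (fun t => u (l1 b t)) (fun t => b * u t)) => //.
  - by move=> x y /=; rewrite l1add // uadd.
  - by move=> x y /=; rewrite uadd mulrDr.
  move=> e a he ha /=; rewrite T1_l // !utau ?mulA // mulrA.
  by case: he => _ hc; rewrite hc // mulrA.
have uR : forall c t, c \in A -> u (r1 t c) = u t * c.
  move=> c t hc; apply: (uniq1 (fun t => u (r1 t c)) (fun t => u t * c)) => //.
  - by move=> x y /=; rewrite (r1add c hc) uadd.
  - by move=> x y /=; rewrite uadd mulrDl.
  by move=> e a he ha /=; rewrite T1_r // !utau ?mulA // mulrA.
have psiex : forall x, exists t, one_forms A delta x -> u t = x.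
  move=> x; case: (classic (one_forms A delta x)) => [hx|hx].
    by case: (uim x) => /(_ hx) [t0 ht] _; exists t0.
  by exists 0.
pose psi x := projT1 (constructive_indefinite_description _ (psiex x)).
have psiP : forall x, one_forms A delta x -> u (psi x) = x.
  by move=> x; rewrite /psi; case: constructive_indefinite_description.
have iso1 : bimodule_iso A (one_forms A delta) l1 r1 psi.
  rewrite /bimodule_iso; split.
  - by move=> x y hx hy; apply: uinj; rewrite uadd !psiP //; apply/uim;
      have [t1 e1] := proj1 (uim x) hx; have [t2 e2] := proj1 (uim y) hy; exists (t1 + t2); rewrite uadd e1 e2.
  - move=> b x hb hx; apply: uinj; rewrite uL // !psiP //.
    apply/uim; have [t1 e1] := proj1 (uim x) hx; by exists (l1 b t1); rewrite uL // e1.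
  - move=> x c hc hx; apply: uinj; rewrite uR // !psiP //.
    apply/uim; have [t1 e1] := proj1 (uim x) hx; by exists (r1 t1 c); rewrite uR // e1.
  - by move=> x y hx hy e; rewrite -(psiP x hx) -(psiP y hy) e.
  - move=> t1; exists (u t1); have Eu : one_forms A delta (u t1) by apply/uim; exists t1.
    by split => //; apply: uinj; rewrite psiP.
have balf : balanced_map EZ (center_alg A) (fun a => a \in A)
    (fun e a => tau2 a e).
  case: tau2_bal => b1 b2 b3.
  split.
  - by move=> m m' n hm hm' hn; rewrite b2.
  - by move=> m n n' hm hn hn'; rewrite b1.
  move=> m z n hm [hz zc] hn.
  have -> : z * n = n * z by rewrite zc.
  rewrite b3 //; case: hm => [hm1 mc]; by rewrite mc.
have balh : balanced_map (fun a => a \in A) (center_alg A) EZ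
    (fun a e => tau1 e a).
  case: tau1_bal => b1 b2 b3.
  split.
  - by move=> m m' n hm hm' hn; rewrite b2.
  - by move=> m n n' hm hn hn'; rewrite b1.
  move=> m z n hm [hz zc] hn.
  have -> : m * z = z * m by rewrite zc.
  rewrite -b3 //; case: hn => [hn1 nc]; by rewrite nc.
case: (T1_univ T2 _ balf) => [[g [gadd gtau]] _].
case: (T2_univ T1 _ balh) => [[h [hadd htau]] _].
have hg : forall t, h (g t) = t.
  apply: ((T1_univ T1 _ tau1_bal).2) => //.
  - by move=> x y; rewrite gadd hadd.
  - by move=> e a he ha; rewrite gtau // htau.
have gh : forall t, g (h t) = t.
  apply: ((T2_univ T2 _ tau2_bal).2) => //.
  - by move=> x y; rewrite hadd gadd.
  - by move=> a e ha he; rewrite htau // gtau.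
have gL : forall b t, b \in A -> g (l1 b t) = l2 b (g t).
  move=> b t hb; apply: ((T1_univ T2 _ balf).2
     (fun t => g (l1 b t)) (fun t => l2 b (g t))) => //.
  - by move=> x y /=; rewrite l1add // gadd.
  - by move=> x y /=; rewrite gadd l2add.
  by move=> e a he ha /=; rewrite T1_l // !gtau ?mulA // T2_l.
have gR : forall c t, c \in A -> g (r1 t c) = r2 (g t) c.
  move=> c t hc; apply: ((T1_univ T2 _ balf).2
     (fun t => g (r1 t c)) (fun t => r2 (g t) c)) => //.
  - by move=> x y /=; rewrite (r1add c hc) gadd.
  - by move=> x y /=; rewrite gadd (r2add c hc).
  by move=> e a he ha /=; rewrite T1_r // !gtau ?mulA // T2_r.
split; last by exists psi.
exists (fun x => g (psi x)).
case: iso1 => i1 i2 i3 i4 i5.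
rewrite /bimodule_iso; split.
- by move=> x y hx hy; rewrite i1 // gadd.
- by move=> b x hb hx; rewrite i2 // gL.
- by move=> x c hc hx; rewrite i3 // gR.
- by move=> x y hx hy e; apply: i4 => //; rewrite -(hg (psi x)) e hg.
- move=> t; case: (i5 (h t)) => x [hx e]; exists x; split => //.
  by rewrite e gh.
Qed.
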